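(* Let $X$ be a C*-correspondence of finite rank over $A$ and let $\beta>0$. If $\tau\in\operatorname{Avt}_\beta(A)$ then $c_{\tau,\beta}=\infty$.
   Context: $X$ is a C*-correspondence over $A$ (right Hilbert $A$-module with left action $\phi_X\colon A\to\mathcal{L}(X)$). $X$ has finite rank if there are $x_1,\dots,x_d$ in the unit ball of $X$ with $\sum_{i=1}^d\theta_{x_i,x_i}=1_X$, where $\theta_{\xi,\eta}(\zeta)=\xi\langle\eta,\zeta\rangle$ (a unit decomposition). For a word $\mu=\mu_n\cdots\mu_1$ on $\{1,\dots,d\}$ put $x_\mu=x_{\mu_n}\otimes\cdots\otimes x_{\mu_1}\in X^{\otimes n}$, and $x_\emptyset=1$ (unit of $A$ or of its unitization). $\operatorname{Tr}(A)$ denotes the tracial states of $A$ (extended to the unitization when needed). For $\tau\in\operatorname{Tr}(A)$ and $\beta>0$, $c_{\tau,\beta}:=\sum_{k=0}^\infty e^{-k\beta}\sum_{|\mu|=k}\tau(\langle x_\mu,x_\mu\rangle)$ (the $k=0$ term being $1$), a value in $[1,\infty]$ independent of the unit decomposition. $\operatorname{Avt}_\beta(A)$ is the set of $\tau\in\operatorname{Tr}(A)$ with $\tau(a)=e^{-\beta}\sum_{i=1}^d\tau(\langle x_i,ax_i\rangle)$ for all $a\in A$. *)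

(* Defs.v *)
From HB Require Import structures.
From mathcomp Require Import all_boot all_order all_algebra.
From mathcomp Require Import all_classical all_reals all_analysis.
From mathcomp Require Import complex.
Set Implicit Arguments. Unset Strict Implicit. Unset Printing Implicit Defensive.
Import Order.TTheory GRing.Theory Num.Theory.
Local Open Scope ring_scope.

(* C*-algebras (not necessarily unital), over the complex field R[i]. *)
Section CStar.
Variable R : realType.
Local Notation C := (R[i]).

Record is_cstar_algebra (A : lmodType C) (mul : A -> A -> A) (star : A -> A)
    (nrm : A -> R) : Prop := IsCStarAlgebra {
  cs_mulA : forall x y z, mul x (mul y z) = mul (mul x y) z;
  cs_mulDl : forall x y z, mul (x + y) z = mul x z + mul y z;
  cs_mulDr : forall x y z, mul x (y + z) = mul x y + mul x z;
  cs_mulZl : forall (c : C) x y, mul (c *: x) y = c *: mul x y;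
  cs_mulZr : forall (c : C) x y, mul x (c *: y) = c *: mul x y;
  cs_starK : forall x, star (star x) = x;
  cs_starD : forall x y, star (x + y) = star x + star y;
  cs_starZ : forall (c : C) x, star (c *: x) = conjc c *: star x;
  cs_starM : forall x y, star (mul x y) = mul (star y) (star x);
  cs_nrm_eq0 : forall x, nrm x = 0 -> x = 0;
  cs_nrm_ge0 : forall x, 0 <= nrm x;
  cs_nrmD : forall x y, nrm (x + y) <= nrm x + nrm y;
  cs_nrmZ : forall (c : C) x, nrm (c *: x) = Normc.normc c * nrm x;
  cs_nrmM : forall x y, nrm (mul x y) <= nrm x * nrm y;
  cs_nrm_cstar : forall x, nrm (mul (star x) x) = nrm x ^+ 2;
  cs_complete : forall u : nat -> A,
    (forall e : R, 0 < e -> exists N, forall m n, (N <= m)%N -> (N <= n)%N ->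
        nrm (u m - u n) < e) ->
    exists l, forall e : R, 0 < e -> exists N, forall n, (N <= n)%N ->
        nrm (u n - l) < e
}.

Definition cs_positive (A : lmodType C) (mul : A -> A -> A) (star : A -> A)
  (a : A) : Prop := exists b, a = mul (star b) b.

Definition is_tracial_state (A : lmodType C) (mul : A -> A -> A) (star : A -> A)
    (nrm : A -> R) (tau : A -> C) : Prop :=
  [/\ (forall x y, tau (x + y) = tau x + tau y) /\
        (forall (c : C) x, tau (c *: x) = c * tau x),
      (forall b, 0 <= tau (mul (star b) b)),
      (forall a, nrm a <= 1 -> Normc.normc (tau a) <= 1) /\
        (forall e : R, 0 < e -> exists a, nrm a <= 1 /\ 1 - e < Normc.normc (tau a)) &
      (forall a b, tau (mul a b) = tau (mul b a))].

Definition hnorm (A X : lmodType C) (nrm : A -> R) (ip : X -> X -> A) (x : X) : R :=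
  Num.sqrt (nrm (ip x x)).

Record is_cstar_correspondence (A : lmodType C) (mul : A -> A -> A) (star : A -> A)
    (nrm : A -> R) (X : lmodType C) (ract : X -> A -> X) (ip : X -> X -> A)
    (phi : A -> X -> X) : Prop := IsCStarCorrespondence {
  cc_ractDl : forall x y a, ract (x + y) a = ract x a + ract y a;
  cc_ractDr : forall x a b, ract x (a + b) = ract x a + ract x b;
  cc_ractZl : forall (c : C) x a, ract (c *: x) a = c *: ract x a;
  cc_ractZr : forall (c : C) x a, ract x (c *: a) = c *: ract x a;
  cc_ractM : forall x a b, ract (ract x a) b = ract x (mul a b);
  cc_ipD : forall x y z, ip x (y + z) = ip x y + ip x z;
  cc_ipZ : forall (c : C) x y, ip x (c *: y) = c *: ip x y;
  cc_ipR : forall x y a, ip x (ract y a) = mul (ip x y) a;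
  cc_ip_star : forall x y, star (ip x y) = ip y x;
  cc_ip_pos : forall x, cs_positive mul star (ip x x);
  cc_ip_eq0 : forall x, ip x x = 0 -> x = 0;
  cc_complete : forall u : nat -> X,
    (forall e : R, 0 < e -> exists N, forall m n, (N <= m)%N -> (N <= n)%N ->
        hnorm nrm ip (u m - u n) < e) ->
    exists l, forall e : R, 0 < e -> exists N, forall n, (N <= n)%N ->
        hnorm nrm ip (u n - l) < e;
  cc_phi_lin : forall a x y (c : C), phi a (x + c *: y) = phi a x + c *: phi a y;
  cc_phi_ract : forall a x b, phi a (ract x b) = ract (phi a x) b;
  cc_phi_adj : forall a x y, ip (phi a x) y = ip x (phi (star a) y);
  cc_phiD : forall a b x, phi (a + b) x = phi a x + phi b x;
  cc_phiZ : forall (c : C) a x, phi (c *: a) x = c *: phi a x;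
  cc_phiM : forall a b x, phi (mul a b) x = phi a (phi b x)
}.

(* unit decomposition: x_1..x_d in the unit ball with sum_i theta_{x_i,x_i} = 1_X *)
Definition unit_decomposition (A X : lmodType C) (nrm : A -> R)
    (ract : X -> A -> X) (ip : X -> X -> A) (d : nat) (x : 'I_d -> X) : Prop :=
  (forall i, hnorm nrm ip (x i) <= 1) /\
  (forall z : X, \sum_(i < d) ract (x i) (ip (x i) z) = z).

Definition Avt (A X : lmodType C) (mul : A -> A -> A) (star : A -> A)
    (nrm : A -> R) (ip : X -> X -> A) (phi : A -> X -> X)
    (d : nat) (x : 'I_d -> X) (beta : R) (tau : A -> C) : Prop :=
  is_tracial_state mul star nrm tau /\
  forall a : A, tau a = ((expR (- beta))%:C)%C * \sum_(i < d) tau (ip (x i) (phi a (x i))).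

(* <x_mu, x_mu> in A for a nonempty word, computed via the interior tensor   *)
(* product: <x (x) y, x (x) y> = <y, phi(<x,x>) y>.  The word                 *)
(* mu = mu_n ... mu_1 is represented by the list [:: mu_1; mu_2; ...; mu_n], *)
(* and x_mu = x_{mu_n} (x) ... (x) x_{mu_1}.  (Value at the empty word is     *)
(* irrelevant: the k = 0 term of c_{tau,beta} is 1 by convention.)            *)
Fixpoint word_ip (A X : lmodType C) (ip : X -> X -> A) (phi : A -> X -> X)
    (d : nat) (x : 'I_d -> X) (mu : seq 'I_d) : A :=
  match mu with
  | [::] => 0
  | i :: s => if s is [::] then ip (x i) (x i)
              else ip (x i) (phi (word_ip ip phi x s) (x i))
  end.

(* k-th term e^{-k beta} sum_{|mu|=k} tau(<x_mu,x_mu>) (real number; the trace *)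
(* value is real since <x_mu,x_mu> is positive), with k = 0 term equal to 1.   *)
Definition c_term (A X : lmodType C) (ip : X -> X -> A) (phi : A -> X -> X)
    (d : nat) (x : 'I_d -> X) (beta : R) (tau : A -> C) (k : nat) : R :=
  if k is 0 then 1
  else expR (- (k%:R * beta)) *
       complex.Re (\sum_(mu : k.-tuple 'I_d) tau (word_ip ip phi x mu)).

Definition c_const (A X : lmodType C) (ip : X -> X -> A) (phi : A -> X -> X)
    (d : nat) (x : 'I_d -> X) (beta : R) (tau : A -> C) : \bar R :=
  (\sum_(0 <= k <oo) (c_term ip phi x beta tau k)%:E)%E.

End CStar.

(* Main.v *)
Require Import Defs.
From HB Require Import structures.
From mathcomp Require Import all_boot all_order all_algebra.
From mathcomp Require Import all_classical all_reals all_analysis.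
From mathcomp Require Import complex.
From mathcomp Require Import lra.
Import Order.TTheory GRing.Theory Num.Theory.
Local Open Scope ring_scope.
From mathcomp Require Import ring.
Lemma cs_aux (R : realType) (p q r : R[i]) : 0 <= r ->
  (forall t : R[i], 0 <= conjc t * q + t * (p + conjc t * r)) -> p = 0.
Proof.
case: p => a b; case: q => c e; case: r => f g.
rewrite lecE /= => /andP[/eqP g0 f0] H.
have H1 := H (1%:C)%C. have H2 := H 'i%C.
have [s1 Hs1] : exists s1, s1 = - (a + c) / (f + 1) by eexists.
have [s2 Hs2] : exists s2, s2 = - (e - b) / (f + 1) by eexists.
have H3 := H (s1%:C)%C.
have H4 := H ((s2 *i))%C.
move: H1 H2 H3 H4; rewrite !lecE /= g0.
move=> /andP[/eqP E1 I1] /andP[/eqP E2 I2] /andP[/eqP E3 I3] /andP[/eqP E4 I4].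
have f1 : f + 1 != 0 by rewrite gt_eqF // ltr_wpDl.
have e1 : s1 * (f + 1) = - (a + c) by rewrite Hs1 mulrAC -mulrA divff // mulr1.
have e2 : s2 * (f + 1) = - (e - b) by rewrite Hs2 mulrAC -mulrA divff // mulr1.
rewrite ?(mul0r, mul1r, mulr0, subr0, oppr0, add0r, addr0, mulN1r, opprK, sub0r) in E1 E2 I1 I2 I3 I4.
have k1 : s1 * s1 <= 0 by nra.
have k2 : s2 * s2 <= 0 by nra.
have k1' : s1 = 0 by nra.
have k2' : s2 = 0 by nra.
have [-> ->] : a = 0 /\ b = 0 by nra.
by [].
Qed.
Lemma series_div (R : realType) (u : nat -> R) (m : R) : 0 < m ->
  (forall k, m <= u k) -> (\sum_(0 <= k <oo) (u k)%:E = +oo)%E.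
Proof.
move=> m0 um.
have H k : ((k%:R * m)%:E <= \sum_(0 <= i <oo) (u i)%:E)%E.
  apply: le_trans (nneseries_lim_ge (m:=0) k _); last first.
    by move=> n _ _; rewrite lee_fin (le_trans (ltW m0)).
  rewrite sumEFin lee_fin.
  apply: le_trans (ler_sum _ (fun i _ => um i)).
  by rewrite sumr_const_nat subn0 mulr_natl.
move: H; case: (\sum_(0 <= i <oo) (u i)%:E)%E => // [r|] H.
  have := H (Num.truncn (r / m)).+1; rewrite lee_fin.
  have := truncnS_gt (r / m).
  rewrite -(ler_pdivlMr _ _ m0) => h1 h2.
  by have := lt_le_trans h1 h2; rewrite ltxx.
by have := H 0%N.
Qed.
Lemma sum_tupleS (V : nmodType) (d k : nat) (F : k.+1.-tuple 'I_d -> V) :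
  \sum_(t : k.+1.-tuple 'I_d) F t =
  \sum_(i < d) \sum_(t : k.-tuple 'I_d) F [tuple of i :: t].
Proof.
rewrite pair_big /=.
rewrite (reindex (fun p : 'I_d * k.-tuple 'I_d => [tuple of p.1 :: p.2])) //=.
exists (fun t : k.+1.-tuple 'I_d => (thead t, [tuple of behead t])).
  by move=> [i t] _ /=; rewrite theadE; congr pair; apply: val_inj.
by move=> t _; rewrite [RHS]tuple_eta.
Qed.

Lemma sum_tuple0 (V : nmodType) (d : nat) (F : 0.-tuple 'I_d -> V) :
  \sum_(t : 0.-tuple 'I_d) F t = F [tuple].
Proof. by rewrite (big_pred1 [tuple]) // => t; rewrite /= [t]tuple0; apply/esym/eqP. Qed.

Lemma word_ip_cons (R : realType) (A X : lmodType R[i]) (ip : X -> X -> A)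
  (phi : A -> X -> X) d (x : 'I_d -> X) n (t : n.+1.-tuple 'I_d) i :
  word_ip ip phi x [tuple of i :: t] = ip (x i) (phi (word_ip ip phi x t) (x i)).
Proof. by case: t => [[|j s] //]. Qed.

Lemma ReM_real (R : realType) (e : R) (z : R[i]) : complex.Re ((e%:C)%C * z) = e * complex.Re z.
Proof. by case: z => a b /=; rewrite mul0r subr0. Qed.

Theorem proposition5p4 (R : realType)
    (A : lmodType R[i]) (mul : A -> A -> A) (star : A -> A) (nrm : A -> R)
    (X : lmodType R[i]) (ract : X -> A -> X) (ip : X -> X -> A) (phi : A -> X -> X)
    (HA : is_cstar_algebra mul star nrm)
    (HX : is_cstar_correspondence mul star nrm ract ip phi)
    (d : nat) (x : 'I_d -> X) (Hx : unit_decomposition nrm ract ip x)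
    (beta : R) (Hbeta : 0 < beta) (tau : A -> R[i])
    (Htau : Avt mul star nrm ip phi x beta tau) :
  c_const ip phi x beta tau = +oo%E.
Proof.
case: Htau => [[[tauD tauZ] tpos [tnrm texists] ttr] Havt].
have tau0 : tau 0 = 0 by have := tauZ 0 0; rewrite scale0r mul0r.
have ipDl u v w : ip (u + v) w = ip u w + ip v w.
  by rewrite -(cc_ip_star HX w (u + v)) (cc_ipD HX) (cs_starD HA) !(cc_ip_star HX).
have ipZl c u w : ip (c *: u) w = conjc c *: ip u w.
  by rewrite -(cc_ip_star HX w) (cc_ipZ HX) (cs_starZ HA) (cc_ip_star HX).
have tpos_ip u : 0 <= tau (ip u u) by case: (cc_ip_pos HX u) => b ->; apply: tpos.
have CS u v : tau (ip u u) = 0 -> tau (ip u v) = 0.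
  move=> h; apply: (@cs_aux R _ (tau (ip v u)) _ (tpos_ip v)) => t.
  have := tpos_ip (u + t *: v).
  by rewrite (cc_ipD HX) (cc_ipZ HX) !ipDl !ipZl !(tauD, tauZ) h add0r.
have avt' a : \sum_i tau (ip (x i) (phi a (x i))) = ((expR beta)%:C)%C * tau a.
  by rewrite [tau a]Havt mulrA -rmorphM /= -expRD addrN expR0 mul1r.
have rec n : \sum_(t : n.+2.-tuple 'I_d) tau (word_ip ip phi x t) =
    ((expR beta)%:C)%C * \sum_(t : n.+1.-tuple 'I_d) tau (word_ip ip phi x t).
  rewrite sum_tupleS exchange_big /= mulr_sumr; apply: eq_bigr => t _.
  by case: t => [[|j s] Ht] //; apply: avt'.
have ct1 k : c_term ip phi x beta tau k.+1 = c_term ip phi x beta tau 1.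
  elim: k => // k IH; rewrite -IH /c_term rec ReM_real mulrA -expRD.
  congr (expR _ * _); rewrite -[k.+2%:R]natr1; ring.
have ctpos : 0 < c_term ip phi x beta tau 1.
  rewrite /c_term sum_tupleS.
  under eq_bigr do rewrite sum_tuple0 /=.
  rewrite pmulr_rgt0 ?expR_gt0 //.
  set S1 := \sum_(i < d) _.
  have S1ge : 0 <= S1 := sumr_ge0 _ (fun i _ => tpos_ip (x i)).
  rewrite ltNge; apply/negP => hle.
  have S10 : S1 = 0.
    move: S1ge hle; rewrite lecE; case: S1 => a b /= /andP[/eqP -> ha] hle.
    by have -> : a = 0 by apply/le_anti/andP.
  have each := psumr_eq0P (fun i _ => tpos_ip (x i)) S10.
  have tau_zero a : tau a = 0.
    by rewrite Havt big1 ?mulr0 // => i _; apply: CS; apply: each.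
  have h2 : (0 : R) < 1 / 2 by lra.
  case: (texists _ h2) => a [_]; rewrite tau_zero Normc.normc0; lra.
rewrite /c_const; apply: (@series_div _ _ (Num.min 1 (c_term ip phi x beta tau 1))).
  by rewrite lt_min ctpos andbT.
case=> [|k].
  rewrite ge_min; apply/orP; left; exact: lexx.
rewrite ct1 ge_min; apply/orP; right; exact: lexx.
Qed.
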